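(* Let $(G,\cdot)$ be a group and $\psi\in\operatorname{End}(G,\cdot)$ with $\psi([[G,\psi],G])\le Z(G,\cdot)$. Then each of the following maps $G\times G\to G\times G$ defines a set-theoretic non-degenerate solution $(G,r)$ of the Yang--Baxter equation: $$r_1(g,h)=\big(\psi(g)^{-1}h\,\psi(g),\ \psi(g^{-1}h)\,h^{-1}\psi(g)\,g\,\psi(g)^{-1}h\,\psi(h^{-1}g)\big);$$ $$r_2(g,h)=\big(g\,\psi(g)^{-1}h\,\psi(g)\,g^{-1},\ \psi(h)\,g\,\psi(h)^{-1}\big);$$ $$r_3(g,h)=\big(\psi(g)\,h\,\psi(g)^{-1},\ \psi(g)\,h^{-1}\psi(g)^{-1}g\,h\big);$$ $$r_4(g,h)=\big(g\,h\,\psi(h)^{-1}g^{-1}\psi(h),\ \psi(h)^{-1}g\,\psi(h)\big).$$ Moreover $r_1$ and $r_2$ are mutually inverse and they coincide if and only if $(G,\cdot)$ is abelian; $r_3$ and $r_4$ are mutually inverse and they coincide if and only if $g\,\psi(g)^{-1}h\,\psi(g)=h\,\psi(h)^{-1}g\,\psi(h)$ for all $g,h\in G$.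
   Context: All products are in $(G,\cdot)$. For $\psi\in\operatorname{End}(G,\cdot)$, $[g,\psi]=g\cdot\psi(g)^{-1}$ and $[G,\psi]$ is the subgroup generated by these elements; $[x,y]=xyx^{-1}y^{-1}$ and $[A,B]$ is the subgroup generated by $[a,b]$, $a\in A,b\in B$; $Z(G,\cdot)$ is the centre. A set-theoretic solution of the Yang--Baxter equation is a pair $(X,r)$ with $X\neq\emptyset$ and $r\colon X\times X\to X\times X$, $r(x,y)=(\sigma_x(y),\tau_y(x))$, a bijection satisfying $(r\times\mathrm{id}_X)(\mathrm{id}_X\times r)(r\times\mathrm{id}_X)=(\mathrm{id}_X\times r)(r\times\mathrm{id}_X)(\mathrm{id}_X\times r)$; it is non-degenerate if all $\sigma_x$ and $\tau_x$ are bijective. *)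

(* Defs.v *)
From mathcomp Require Import all_boot.
Set Implicit Arguments. Unset Strict Implicit. Unset Printing Implicit Defensive.
Local Open Scope group_scope.

Section YBE.
Variable X : Type.
Variable r : X * X -> X * X.

Definition r_id (t : X * X * X) : X * X * X :=
  let: (x, y, z) := t in let: (a, b) := r (x, y) in (a, b, z).
Definition id_r (t : X * X * X) : X * X * X :=
  let: (x, y, z) := t in let: (b, c) := r (y, z) in (x, b, c).

Definition braid_relation : Prop :=
  forall t, r_id (id_r (r_id t)) = id_r (r_id (id_r t)).

Definition sigma_ (x : X) : X -> X := fun y => (r (x, y)).1.
Definition tau_ (y : X) : X -> X := fun x => (r (x, y)).2.

Definition ybe_solution : Prop := bijective r /\ braid_relation.

Definition nondegenerate : Prop :=
  (forall x, bijective (sigma_ x)) /\ (forall y, bijective (tau_ y)).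

Definition nondeg_ybe_solution : Prop := ybe_solution /\ nondegenerate.
End YBE.

Section GroupNotions.
Variable G : groupType.

(* paper's commutator [x, y] = x y x^-1 y^-1 *)
Definition pcomm (x y : G) : G := x * y * x^-1 * y^-1.

Inductive gen (S : G -> Prop) : G -> Prop :=
  | gen_in x : S x -> gen S x
  | gen_one : gen S 1
  | gen_mul x y : gen S x -> gen S y -> gen S (x * y)
  | gen_inv x : gen S x -> gen S x^-1.

Definition commG_psi (psi : G -> G) : G -> Prop :=
  gen (fun k => exists g, k = g * (psi g)^-1).

Definition commSub (A B : G -> Prop) : G -> Prop :=
  gen (fun c => exists a b, A a /\ B b /\ c = pcomm a b).

Definition in_center (z : G) : Prop := forall y, z * y = y * z.

Definition abelian_grp : Prop := forall x y : G, x * y = y * x.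

Variable psi : G -> G.
Definition r1 (p : G * G) : G * G :=
  let: (g, h) := p in
  ((psi g)^-1 * h * psi g,
   psi (g^-1 * h) * h^-1 * psi g * g * (psi g)^-1 * h * psi (h^-1 * g)).
Definition r2 (p : G * G) : G * G :=
  let: (g, h) := p in
  (g * (psi g)^-1 * h * psi g * g^-1, psi h * g * (psi h)^-1).
Definition r3 (p : G * G) : G * G :=
  let: (g, h) := p in
  (psi g * h * (psi g)^-1, psi g * h^-1 * (psi g)^-1 * g * h).
Definition r4 (p : G * G) : G * G :=
  let: (g, h) := p in
  (g * h * (psi h)^-1 * g^-1 * psi h, (psi h)^-1 * g * psi h).
End GroupNotions.

(* Main.v *)
Require Import Defs.
From mathcomp Require Import all_boot.
From Stdlib Require Import FunctionalExtensionality.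
Set Implicit Arguments. Unset Strict Implicit. Unset Printing Implicit Defensive.
Local Open Scope group_scope.

Ltac gs := rewrite ?invgM ?invgK ?invg1 ?mulgA;
  rewrite ?(mulgK, mulgVK, mulgV, mulVg, mul1g, mulg1).

Section Main.
Variables (G : groupType) (psi : G -> G).
Hypothesis Hm : monoid_morphism psi.
Hypothesis Hc : forall x, commSub (commG_psi psi) (fun _ => True) x -> in_center (psi x).

Lemma psi1 : psi 1 = 1. Proof. exact: Hm.1. Qed.
Lemma psiM x y : psi (x * y) = psi x * psi y. Proof. exact: Hm.2. Qed.
Lemma psiV x : psi x^-1 = (psi x)^-1.
Proof. apply: (mulgI (psi x)). by rewrite -psiM !mulgV psi1. Qed.

Definition cj (c w : G) := c * w * c^-1.
Definition sg (a w : G) := cj (psi a) w.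
Definition kk (g : G) := g * (psi g)^-1.
Definition K := commG_psi psi.

Lemma cjM c x y : cj c (x * y) = cj c x * cj c y.
Proof. rewrite /cj; gs; done. Qed.
Lemma cjV c x : cj c x^-1 = (cj c x)^-1.
Proof. rewrite /cj; gs; done. Qed.
Lemma cj_mul a b w : cj (a * b) w = cj a (cj b w).
Proof. rewrite /cj; gs; done. Qed.
Lemma cjK c w : cj c^-1 (cj c w) = w.
Proof. rewrite /cj; gs; done. Qed.
Lemma cjKV c w : cj c (cj c^-1 w) = w.
Proof. rewrite /cj; gs; done. Qed.
Lemma cj_center (z w : G) : in_center z -> cj z w = w.
Proof. by move=> Hz; rewrite /cj Hz mulgK. Qed.
Lemma centerV (z : G) : in_center z -> in_center z^-1.
Proof. move=> Hz y; apply: (mulgI z). by rewrite mulVKg mulgA Hz mulgK. Qed.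
Lemma cj_Mc (z x w : G) : in_center z -> cj (x * z) w = cj x w.
Proof. by move=> Hz; rewrite cj_mul (cj_center _ Hz). Qed.
Lemma cj_cM (z x w : G) : in_center z -> cj (z * x) w = cj x w.
Proof. by move=> Hz; rewrite cj_mul (cj_center _ Hz). Qed.

Lemma sgM a x y : sg a (x * y) = sg a x * sg a y. Proof. exact: cjM. Qed.
Lemma sgV a x : sg a x^-1 = (sg a x)^-1. Proof. exact: cjV. Qed.
Lemma sg_mul a b w : sg (a * b) w = sg a (sg b w).
Proof. by rewrite /sg psiM cj_mul. Qed.
Lemma sgK a w : sg a^-1 (sg a w) = w.
Proof. by rewrite /sg psiV cjK. Qed.
Lemma sgKV a w : sg a (sg a^-1 w) = w.
Proof. by rewrite /sg psiV cjKV. Qed.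
Lemma sg_c (a z : G) : in_center z -> sg a z = z.
Proof. by move=> Hz; rewrite /sg /cj -(Hz (psi a)) mulgK. Qed.

Lemma Kgen g : K (kk g).
Proof. by apply: gen_in; exists g. Qed.
Lemma Kmul x y : K x -> K y -> K (x * y). Proof. exact: gen_mul. Qed.
Lemma Kinv x : K x -> K x^-1. Proof. exact: gen_inv. Qed.
Lemma Kcj x k : K k -> K (cj x k).
Proof.
elim=> [y [g ->]| | a b _ Ha _ Hb | a _ Ha].
- have -> : cj x (g * (psi g)^-1) = kk (x * g) * (kk x)^-1.
    by rewrite /cj /kk psiM; gs.
  by apply: Kmul; [apply: Kgen | apply: Kinv; apply: Kgen].
- by rewrite /cj mulg1 mulgV; apply: gen_one.
- by rewrite cjM; apply: Kmul.
- by rewrite cjV; apply: Kinv.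
Qed.
Lemma Kcomm (k b : G) : K k -> in_center (psi (pcomm k b)).
Proof. move=> Hk; apply: Hc; apply: gen_in; by exists k, b. Qed.

Lemma cj_pcomm k b : cj k b = pcomm k b * b.
Proof. by rewrite /cj /pcomm mulgVK. Qed.

Lemma sg_cjK k b w : K k -> sg (cj k b) w = sg b w.
Proof.
move=> Hk; rewrite (cj_pcomm k b). rewrite sg_mul {1}/sg cj_center //; exact: Kcomm.
Qed.

Lemma sg_split a b : sg a b = a * cj (kk a^-1) b * a^-1.
Proof. rewrite /sg /kk /cj psiV; gs; done. Qed.

Lemma sg_sg a b w : sg (sg a b) w = sg a (sg b (sg a^-1 w)).
Proof. rewrite [sg a b]sg_split 2!sg_mul sg_cjK //; apply: Kgen. Qed.

Lemma psi_sg (a b : G) : exists z, in_center z /\ psi (sg a b) = z * sg a (psi b).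
Proof.
exists (psi (pcomm (kk a^-1) b)); split; first by apply: Kcomm; apply: Kgen.
rewrite [sg a b]sg_split cj_pcomm psiM (psiM a) (psiM (pcomm _ _)) psiV.
set z := psi (pcomm _ _).
have Hz : in_center z by apply: Kcomm; apply: Kgen.
rewrite /sg /cj !mulgA -(Hz (psi a)); done.
Qed.

Lemma kk_sg (a b : G) : exists z, in_center z /\ kk (sg a b) = sg a (kk b) * z.
Proof.
have [z [Hz E]] := psi_sg a b.
exists z^-1; split; first exact: centerV.
by rewrite /kk E sgM sgV invgM mulgA.
Qed.

Lemma sg_cjV k b w : K k -> sg (cj k b)^-1 w = sg b^-1 w.
Proof. by move=> Hk; rewrite -cjV sg_cjK. Qed.

Lemma sg_mu a b w : sg (cj (kk a) b) w = sg b w.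
Proof. apply: sg_cjK; apply: Kgen. Qed.


Definition r1' (p : G * G) : G * G :=
  let: (g, h) := p in (sg g^-1 h, cj (sg g^-1 (kk h))^-1 g).
Definition r2' (p : G * G) : G * G :=
  let: (g, h) := p in (cj (kk g) h, sg h g).
Definition r3' (p : G * G) : G * G :=
  let: (g, h) := p in (sg g h, (sg g h)^-1 * g * h).
Definition r4' (p : G * G) : G * G :=
  let: (g, h) := p in (g * h * (sg h^-1 g)^-1, sg h^-1 g).

Lemma r1E : r1 psi = r1'.
Proof.
apply: functional_extensionality => -[g h].
rewrite /r1 /r1' /sg /cj /kk !psiM !psiV; gs; done.
Qed.
Lemma r2E : r2 psi = r2'.
Proof.
apply: functional_extensionality => -[g h].
rewrite /r2 /r2' /sg /cj /kk; gs; done.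
Qed.
Lemma r3E : r3 psi = r3'.
Proof.
apply: functional_extensionality => -[g h].
rewrite /r3 /r3' /sg /cj; gs; done.
Qed.
Lemma r4E : r4 psi = r4'.
Proof.
apply: functional_extensionality => -[g h].
rewrite /r4 /r4' /sg /cj psiV; gs; done.
Qed.

Lemma sg_tt x y w : sg ((sg x y)^-1 * x * y) w = sg x w.
Proof. by rewrite !sg_mul -sgV sg_sg sgK sgK. Qed.

Lemma braid3 : braid_relation r3'.
Proof.
move=> [[x y] z] /=.
rewrite !sg_tt sg_sg sgK [sg x (_ * z)]sgM [sg x (_ * y)]sgM sgV.
by congr (_, _, _); gs.
Qed.

Lemma mu_alt a w : cj (kk a) w = cj a (sg a^-1 w).
Proof. rewrite /sg /cj /kk psiV; gs; done. Qed.
Lemma cj_sg a b q : cj (sg a b) (sg a q) = sg a (cj b q).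
Proof. rewrite /sg /cj; gs; done. Qed.
Lemma cj_cj k y q : cj (cj k y) q = cj k (cj y (cj k^-1 q)).
Proof. rewrite /cj; gs; done. Qed.
Lemma mu_sg y x z : cj (kk (sg y x)) z = sg y (cj (kk x) (sg y^-1 z)).
Proof. by rewrite !mu_alt -sgV sg_sg cj_sg. Qed.
Lemma mu_mu x y w :
  cj (kk (cj (kk x) y)) w = cj (kk x) (cj y (cj (kk x)^-1 (sg y^-1 w))).
Proof. by rewrite mu_alt -cjV sg_mu cj_cj. Qed.

Lemma braid2 : braid_relation r2'.
Proof.
move=> [[x y] z] /=.
congr (_, _, _).
- by rewrite mu_mu mu_sg sgK cjK -mu_alt.
- by rewrite !sg_mu mu_sg sgK.
- by rewrite sg_mu sg_sg sgK.
Qed.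

Lemma Ksg a k : K k -> K (sg a k). Proof. exact: Kcj. Qed.

Lemma c12 : cancel r1' r2'.
Proof.
move=> [g h] /=; congr (_, _).
- have [z [Hz ->]] := kk_sg g^-1 h.
  by rewrite (cj_Mc _ _ Hz) cjKV.
- by rewrite sg_cjK ?sgKV //; apply: Kinv; apply: Ksg; apply: Kgen.
Qed.

Lemma c21 : cancel r2' r1'.
Proof.
move=> [g h] /=; rewrite !(sg_cjV _ _ (Kgen g)) sgK; congr (_, _).
have [z [Hz ->]] := kk_sg h g.
by rewrite sgM sgK (sg_c _ Hz) invgM (cj_cM _ _ (centerV Hz)) cjK.
Qed.

Lemma sg_ttV x y w : sg ((sg x y)^-1 * x * y)^-1 w = sg x^-1 w.
Proof. by rewrite -[in LHS](sgKV x w) -(sg_tt x y (sg x^-1 w)) sgK. Qed.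

Lemma c34 : cancel r3' r4'.
Proof.
move=> [g h] /=; rewrite sg_ttV sgK; congr (_, _); gs; done.
Qed.

Lemma c43 : cancel r4' r3'.
Proof.
move=> [g h] /=.
have E : sg (g * h * (sg h^-1 g)^-1) (sg h^-1 g) = g.
  by rewrite -sgV 2!sg_mul sg_sg invgK !sgKV.
rewrite E; congr (_, _); gs; done.
Qed.

Lemma braid_inv (r r' : G * G -> G * G) :
  cancel r r' -> cancel r' r -> braid_relation r -> braid_relation r'.
Proof.
move=> c1 c2 H.
have cA : cancel (r_id r) (r_id r').
  by move=> [[x y] z] /=; case E: (r (x, y)) => [a b] /=; rewrite -E c1.
have cA' : cancel (r_id r') (r_id r).
  by move=> [[x y] z] /=; case E: (r' (x, y)) => [a b] /=; rewrite -E c2.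
have cB : cancel (id_r r) (id_r r').
  by move=> [[x y] z] /=; case E: (r (y, z)) => [a b] /=; rewrite -E c1.
have cB' : cancel (id_r r') (id_r r).
  by move=> [[x y] z] /=; case E: (r' (y, z)) => [a b] /=; rewrite -E c2.
move=> t.
set u := r_id r' (id_r r' (r_id r' t)).
have -> : t = r_id r (id_r r (r_id r u)) by rewrite /u cA' cB' cA'.
by rewrite H cB cA cB.
Qed.


Lemma nd1 : nondegenerate r1'.
Proof.
split=> y.
- by exists (sg y); move=> x; rewrite /sigma_ /= ?sgK ?sgKV.
- exists (fun w => cj (sg w^-1 (kk y)) w) => x; rewrite /tau_ /=.
  + rewrite sg_cjV ?cjKV //; apply: Kinv; apply: Ksg; apply: Kgen.
  + rewrite sg_cjV ?cjK //; apply: Ksg; apply: Kgen.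
Qed.

Lemma nd2 : nondegenerate r2'.
Proof.
split=> y.
- by exists (cj (kk y)^-1) => x; rewrite /sigma_ /= ?cjK ?cjKV.
- by exists (sg y^-1) => x; rewrite /tau_ /= ?sgK ?sgKV.
Qed.

Lemma nd3 : nondegenerate r3'.
Proof.
split=> y.
- by exists (sg y^-1) => x; rewrite /sigma_ /= ?sgK ?sgKV.
- exists (fun w => sg w y * w * y^-1) => x; rewrite /tau_ /=.
  + by rewrite sg_tt; gs.
  + by rewrite 2!sg_mul sg_sg sgK sgKV; gs.
Qed.

Lemma sg_eqV a b : (forall w, sg a w = sg b w) -> forall w, sg a^-1 w = sg b^-1 w.
Proof. by move=> H w; rewrite -[in LHS](sgKV b w) -(H (sg b^-1 w)) sgK. Qed.
Lemma sg_r4a g h w : sg (g * h * (sg h^-1 g)^-1) w = sg h w.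
Proof. by rewrite -sgV 2!sg_mul sg_sg invgK sgKV sgKV. Qed.
Lemma sg_r4b g v w : sg (g^-1 * v * sg v^-1 g) w = sg v w.
Proof. by rewrite 2!sg_mul sg_sg invgK sgKV sgK. Qed.

Lemma nd4 : nondegenerate r4'.
Proof.
split=> g.
- exists (fun v => g^-1 * v * sg v^-1 g) => h; rewrite /sigma_ /=.
  + rewrite (sg_eqV (sg_r4a g h)); gs; done.
  + rewrite (sg_eqV (sg_r4b g h)); gs; done.
- by exists (sg g) => x; rewrite /tau_ /= ?sgK ?sgKV.
Qed.

Lemma cj_ab c w : abelian_grp G -> cj c w = w.
Proof. by move=> Hab; rewrite /cj (Hab c w) mulgK. Qed.

Lemma iff12 : (forall p, r1' p = r2' p) <-> abelian_grp G.
Proof.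
split.
- move=> H x y; have := H (x, sg x y) => /= /(congr1 fst) /=.
  rewrite sgK mu_alt sgK => E.
  by rewrite {2}E /cj mulgVK.
- move=> Hab [g h]; by rewrite /r1' /r2' /sg !(cj_ab _ _ Hab).
Qed.

Lemma iff34E : (forall p, r3' p = r4' p) <->
  (forall g h, sg g h * sg h^-1 g = g * h).
Proof.
split.
- move=> H g h; have := H (g, h) => /= /(congr1 fst) /= ->.
  by rewrite mulgVK.
- move=> E [g h] /=; congr (_, _).
  + by rewrite -(E g h) mulgK.
  + by rewrite -mulgA -(E g h) mulKg.
Qed.

Lemma Craw g h : g * (psi g)^-1 * h * psi g = g * sg g^-1 h.
Proof. rewrite /sg /cj psiV; gs; done. Qed.

Lemma commE : (forall g h, sg g h * sg h^-1 g = g * h) ->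
  forall a b w, sg a (sg b w) = sg b (sg a w).
Proof.
move=> E a b w.
have X : forall w', sg a^-1 (sg b^-1 (sg a (sg b w'))) = w'.
  move=> w'; have := congr1 (fun v => sg v w') (E a b).
  rewrite /= (sg_mul (sg a b)) (sg_mul a b) sg_sg sg_sg invgK => Y.
  have := congr1 (fun v => sg b^-1 (sg a^-1 v)) Y.
  by rewrite /= !sgK.
have := congr1 (fun v => sg b (sg a v)) (X w).
by rewrite /= !sgKV.
Qed.

Lemma commC : (forall g h, g * sg g^-1 h = h * sg h^-1 g) ->
  forall a b w, sg a (sg b w) = sg b (sg a w).
Proof.
move=> Cc a b w.
have := congr1 (fun v => sg v w) (Cc a b).
rewrite /= (sg_mul a) (sg_mul b) !sg_sg !invgK !sgKV.
by move=> ->.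
Qed.

Lemma iff34 : (forall p, r3' p = r4' p) <->
  (forall g h : G, g * (psi g)^-1 * h * psi g = h * (psi h)^-1 * g * psi h).
Proof.
have [I1 I2] := iff34E; split.
- move=> /I1 E g h; rewrite !Craw.
  have comm := commE E.
  rewrite -(E h (sg h^-1 g)) sgKV -sgV sg_sg invgK (comm h^-1) sgK.
  done.
- move=> C0; apply: I2.
  have Cc : forall g h, g * sg g^-1 h = h * sg h^-1 g by move=> g h; rewrite -!Craw.
  have comm := commC Cc.
  move=> g h; have := Cc (sg g h) g.
  rewrite sgK -sgV sg_sg (comm h^-1) sgKV => ->.
  done.
Qed.

Lemma main_sec :
  nondeg_ybe_solution (r1 psi) /\ nondeg_ybe_solution (r2 psi) /\
      nondeg_ybe_solution (r3 psi) /\ nondeg_ybe_solution (r4 psi) /\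
      (cancel (r1 psi) (r2 psi) /\ cancel (r2 psi) (r1 psi)) /\
      ((forall p, r1 psi p = r2 psi p) <-> abelian_grp G) /\
      (cancel (r3 psi) (r4 psi) /\ cancel (r4 psi) (r3 psi)) /\
      ((forall p, r3 psi p = r4 psi p) <->
         (forall g h : G, g * (psi g)^-1 * h * psi g = h * (psi h)^-1 * g * psi h)).
Proof.
rewrite r1E r2E r3E r4E.
split; [|split; [|split; [|split; [|split; [|split; [|split]]]]]].
- split; [split; [by exists r2'; [exact: c12 | exact: c21] |] | exact: nd1].
  exact: (braid_inv c21 c12 braid2).
- split; [split; [by exists r1'; [exact: c21 | exact: c12] | exact: braid2] | exact: nd2].
- split; [split; [by exists r4'; [exact: c34 | exact: c43] | exact: braid3] | exact: nd3].
- split; [split; [by exists r3'; [exact: c43 | exact: c34] |] | exact: nd4].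
  exact: (braid_inv c34 c43 braid3).
- split; [exact: c12 | exact: c21].
- exact: iff12.
- split; [exact: c34 | exact: c43].
- exact: iff34.
Qed.

End Main.

Theorem mainTheorem6 (G : groupType) (psi : G -> G) :
  monoid_morphism psi ->
  (forall x, commSub (commG_psi psi) (fun _ => True) x -> in_center (psi x)) ->
  nondeg_ybe_solution (r1 psi) /\ nondeg_ybe_solution (r2 psi) /\
      nondeg_ybe_solution (r3 psi) /\ nondeg_ybe_solution (r4 psi) /\
      (cancel (r1 psi) (r2 psi) /\ cancel (r2 psi) (r1 psi)) /\
      ((forall p, r1 psi p = r2 psi p) <-> abelian_grp G) /\
      (cancel (r3 psi) (r4 psi) /\ cancel (r4 psi) (r3 psi)) /\
      ((forall p, r3 psi p = r4 psi p) <->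
         (forall g h : G, g * (psi g)^-1 * h * psi g = h * (psi h)^-1 * g * psi h)).
Proof. move=> Hm Hc; exact: (main_sec Hm Hc). Qed.
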